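(* Let $R>r>0$, $q=\frac{1}{2r}-\frac{1}{2R}$, and let $K^{-1/2}_0$, $\mathcal{K}^*_{\partial\Omega}$ and the family $\{\mathbb{E}(t)\}_{t\in[-1/2,1/2]}$ be as described in the context. Then $\mathcal{K}^*_{\partial\Omega}$ has the spectral resolution $$\mathcal{K}^*_{\partial\Omega}=\int_{-1/2}^{1/2} t\,d\mathbb{E}(t),$$ that is, for all $f,g\in K^{-1/2}_0$, $$\langle f,\mathcal{K}^*_{\partial\Omega}[g]\rangle_{-1/2}=\int_{-1/2}^{1/2} t\,d\langle f,\mathbb{E}(t)g\rangle_{-1/2}.$$
   Context: Setting (crescent domain). Identify $\mathbb{R}^2$ with $\mathbb{C}$; for $a\in\mathbb{R}\setminus\{0\}$ let $B_a$ be the open disk of radius $|a|$ centered at $(a,0)$. Fix $R>r>0$ and let $\Omega=B_R\setminus\overline{B_r}$ (a crescent with a cusp at $0$). Put $q=\frac{1}{2r}-\frac{1}{2R}>0$. For $k\in\mathbb{R}\setminus\{0\}$ define the diagonal matrices $$\mathbb{S}(k)=\frac{1}{2|k|}\begin{bmatrix}1-e^{-|k|q}&0\\0&1+e^{-|k|q}\end{bmatrix},\qquad \mathbb{K}(k)=\frac12 e^{-|k|q}\begin{bmatrix}-1&0\\0&1\end{bmatrix}.$$ The space $K^{-1/2}_0$ is the Hilbert space of pairs $\hat\varphi=(\hat\varphi_1,\hat\varphi_2)^T$ of measurable complex-valued functions on $\mathbb{R}$ (modulo a.e. equality) with $\int_{\mathbb{R}}\hat\varphi(k)^T\mathbb{S}(k)\overline{\hat\varphi(k)}\,dk<\infty$,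 with inner product $\langle\psi,\varphi\rangle_{-1/2}=\int_{\mathbb{R}}\hat\psi(k)^T\mathbb{S}(k)\overline{\hat\varphi(k)}\,dk$. (In the paper an element $\varphi$ of this space is the boundary density $\varphi=U^{-1}P\hat\varphi$ on $\partial\Omega$, where $P=\frac1{\sqrt2}\begin{bmatrix}-1&1\\1&1\end{bmatrix}$ and $U\varphi=(\mathcal{F}(h_R\varphi_R),\mathcal{F}(h_r\varphi_r))^T$ is the Fourier transform of the density pulled back by $z\mapsto 1/z$ to the lines $x=\frac1{2R}$, $x=\frac1{2r}$, with $h_a(y)=1/((2a)^{-2}+y^2)$; one writes $PU\varphi=(\hat\varphi_1,\hat\varphi_2)^T$.) The Neumann–Poincaré operator $\mathcal{K}^*_{\partial\Omega}$ on $K^{-1/2}_0$ is defined by $PU(\mathcal{K}^*_{\partial\Omega}[\varphi])(k)=\mathbb{K}(k)\,PU\varphi(k)$, i.e. it multiplies $\hat\varphi_1$ by $-\frac12e^{-|k|q}$ and $\hat\varphi_2$ by $\frac12 e^{-|k|q}$. For $s\in\mathbb{R}\cup\{\infty\}$ define orthogonal projections $\mathcal{P}^1(s)(\hat\varphi_1,\hat\varphi_2)=(\chi_{(-\infty,s]}\hat\varphi_1,0)$ and $\mathcal{P}^2(s)(\hat\varphi_1,\hat\varphi_2)=(0,\chi_{(-\infty,s]}\hat\varphi_2)$ (with $\chi_{(-\infty,\infty]}\equiv1$), and let $\mathbb{I}=\mathcal{P}^1(\infty)+\mathcal{P}^2(\infty)$ be the identity. Define $$\mathbb{E}(t)=\begin{cases}\mathcal{P}^1\!\left(-\frac{\ln(-2t)}{q}\right)-\mathcal{P}^1\!\left(\frac{\ln(-2t)}{q}\right),&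 t\in[-1/2,0),\\[2pt] \mathcal{P}^2\!\left(\frac{\ln(2t)}{q}\right)-\mathcal{P}^2\!\left(-\frac{\ln(2t)}{q}\right)+\mathbb{I},& t\in(0,1/2],\end{cases}\qquad \mathbb{E}(0)=\lim_{t\to0^+}\mathbb{E}(t).$$ *)

(* Defs.v *)
From mathcomp Require Import all_boot all_order all_algebra.
From mathcomp Require Import all_classical all_reals all_analysis.
From mathcomp Require Import complex.
Import Order.TTheory GRing.Theory Num.Theory.

Set Implicit Arguments.
Unset Strict Implicit.
Unset Printing Implicit Defensive.

Local Open Scope ring_scope.

Section Crescent.
Variable R : realType.

Definition rC (x : R) : R[i] := complex.Complex x 0.
Definition cnorm (z : R[i]) : R :=
  Num.sqrt (complex.Re z ^+ 2 + complex.Im z ^+ 2).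

Definition qval (Rad rad : R) : R := 1 / (2 * rad) - 1 / (2 * Rad).

(* diagonal entries of S(k) (for k = 0 the formula gives 0; a null set) *)
Definition S11 (q k : R) : R := (1 - expR (- (`|k| * q))) / (2 * `|k|).
Definition S22 (q k : R) : R := (1 + expR (- (`|k| * q))) / (2 * `|k|).

(* elements hat phi = (hat phi_1, hat phi_2)^T : pairs of functions R -> C *)
Definition pfun := ((R -> R[i]) * (R -> R[i]))%type.

Definition Sform (q : R) (psi phi : pfun) (k : R) : R[i] :=
  psi.1 k * rC (S11 q k) * (phi.1 k)^* + psi.2 k * rC (S22 q k) * (phi.2 k)^*.

Definition cmeasurable (f : R -> R[i]) : Prop :=
  measurable_fun [set: R] (fun k => complex.Re (f k)) /\
  measurable_fun [set: R] (fun k => complex.Im (f k)).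

Definition inK (q : R) (phi : pfun) : Prop :=
  [/\ cmeasurable phi.1, cmeasurable phi.2 &
   (\int[@lebesgue_measure R]_(k in [set: R]) (complex.Re (Sform q phi phi k))%:E
      < +oo)%E].

Definition ipK (q : R) (psi phi : pfun) : R[i] :=
  complex.Complex
    (Rintegral (@lebesgue_measure R) [set: R] (fun k => complex.Re (Sform q psi phi k)))
    (Rintegral (@lebesgue_measure R) [set: R] (fun k => complex.Im (Sform q psi phi k))).

(* Neumann-Poincare operator in Fourier variables *)
Definition Kstar (q : R) (phi : pfun) : pfun :=
  (fun k => rC (- (1/2) * expR (- (`|k| * q))) * phi.1 k,
   fun k => rC ((1/2) * expR (- (`|k| * q))) * phi.2 k).

Definition chi_le (s : \bar R) (k : R) : R[i] := if (k%:E <= s)%E then 1 else 0.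

Definition P1 (s : \bar R) (phi : pfun) : pfun :=
  (fun k => chi_le s k * phi.1 k, fun _ => 0).
Definition P2 (s : \bar R) (phi : pfun) : pfun :=
  (fun _ => 0, fun k => chi_le s k * phi.2 k).

Definition padd (phi psi : pfun) : pfun := (fun k => phi.1 k + psi.1 k, fun k => phi.2 k + psi.2 k).
Definition psub (phi psi : pfun) : pfun := (fun k => phi.1 k - psi.1 k, fun k => phi.2 k - psi.2 k).

Definition Iop (phi : pfun) : pfun := padd (P1 +oo%E phi) (P2 +oo%E phi).

(* the family E(t); E(0) is the (strong) limit t -> 0+, i.e. the t>0 formula
   with ln(2t)/q replaced by its limit -oo *)
Definition Efam (q t : R) (phi : pfun) : pfun :=
  if t < 0 then
    psub (P1 (- (ln (- (2 * t)) / q))%:E phi) (P1 (ln (- (2 * t)) / q)%:E phi)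
  else if 0 < t then
    padd (psub (P2 (ln (2 * t) / q)%:E phi) (P2 (- (ln (2 * t) / q))%:E phi)) (Iop phi)
  else
    padd (psub (P2 -oo%E phi) (P2 +oo%E phi)) (Iop phi).

Definition tagged_partition (a b : R) (x xi : seq R) : Prop :=
  [/\ size x = (size xi).+1, nth 0 x 0 = a, nth 0 x (size xi) = b,
      forall i, (i < size xi)%N -> nth 0 x i < nth 0 x i.+1 &
      forall i, (i < size xi)%N -> nth 0 x i <= nth 0 xi i <= nth 0 x i.+1].

Definition mesh_lt (x xi : seq R) (delta : R) : Prop :=
  forall i, (i < size xi)%N -> nth 0 x i.+1 - nth 0 x i < delta.

Definition RS_sum (f : R -> R) (F : R -> R[i]) (x xi : seq R) : R[i] :=
  \sum_(i < size xi) rC (f (nth 0 xi i)) * (F (nth 0 x i.+1) - F (nth 0 x i)).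

Definition is_RS_integral (f : R -> R) (F : R -> R[i]) (a b : R) (I : R[i]) : Prop :=
  forall eps : R, 0 < eps ->
    exists2 delta : R, 0 < delta &
      forall x xi, tagged_partition a b x xi -> mesh_lt x xi delta ->
        cnorm (RS_sum f F x xi - I) < eps.

End Crescent.

(* Main.v *)
Require Import Defs.
From mathcomp Require Import all_boot all_order all_algebra.
From mathcomp Require Import all_classical all_reals all_analysis.
From mathcomp Require Import complex.
From mathcomp Require Import ring lra zify.
From mathcomp Require Import measurable_realfun.
Import Order.TTheory GRing.Theory Num.Theory.
Local Open Scope classical_set_scope.
Local Open Scope ring_scope.
Section Aux.
Variable R : realType.
Local Notation mu := (@lebesgue_measure R).

Lemma part_range (a b : R) x xi : tagged_partition a b x xi ->
  forall i, (i <= size xi)%N -> a <= nth 0 x i <= b.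
Proof.
case=> _ x0 xn inc _.
have h1 : forall i, (i <= size xi)%N -> a <= nth 0 x i.
  elim=> [|i IH] Hi; first by rewrite x0.
  by apply: le_trans (IH (ltnW Hi)) _; exact: ltW (inc i Hi).
have h2 : forall j, (j <= size xi)%N -> nth 0 x (size xi - j) <= b.
  elim=> [|j IH] Hj; first by rewrite subn0 xn.
  apply: le_trans (IH (ltnW Hj)).
  have H : (size xi - j.+1 < size xi)%N by lia.
  have := inc _ H; have -> : (size xi - j.+1).+1 = (size xi - j)%N by lia.
  exact: ltW.
move=> i Hi; rewrite h1 //=; have := h2 (size xi - i)%N (leq_subr _ _).
by rewrite subKn.
Qed.

Lemma pw (x xi : seq R) (d l : R) (m : R -> R) :
  tagged_partition (-(1/2)) (1/2) x xi -> mesh_lt x xi d ->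
  (forall t, -(1/2) <= t <= 1/2 -> (m t = 0 /\ t <= l) \/ (m t = 1 /\ l <= t)) ->
  m (-(1/2)) = 0 -> m (1/2) = 1 ->
  `| \sum_(i < size xi) nth 0 xi i * (m (nth 0 x i.+1) - m (nth 0 x i)) - l| <= d.
Proof.
move=> tp ms th m0 m1.
have rng := @part_range _ _ _ _ tp; case: tp => _ x0 xn inc tag.
set n := size xi.
have tel : \sum_(i < n) (m (nth 0 x i.+1) - m (nth 0 x i)) = 1.
  rewrite -(big_mkord xpredT (fun i => m (nth 0 x i.+1) - m (nth 0 x i))).
  by rewrite telescope_sumr // x0 xn m0 m1 subr0.
have -> : \sum_(i < n) nth 0 xi i * (m (nth 0 x i.+1) - m (nth 0 x i)) - l =
   \sum_(i < n) (nth 0 xi i - l) * (m (nth 0 x i.+1) - m (nth 0 x i)).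
  by rewrite (eq_bigr _ (fun i _ => mulrBl _ _ _)) sumrB -mulr_sumr tel mulr1.
apply: le_trans (ler_norm_sum _ _ _) _.
apply: (@le_trans _ _ (\sum_(i < n) d * (m (nth 0 x i.+1) - m (nth 0 x i)))); last first.
  by rewrite -mulr_sumr tel mulr1.
apply: ler_sum => i _.
have hi : (i < n)%N := ltn_ord i.
have /andP[ra rb] := rng i (ltnW hi).
have /andP[ra' rb'] := rng i.+1 hi.
have /andP[t1 t2] := tag i hi.
have ii := inc i hi; have mi := ms i hi.
have /andP[ra0 rb0] := rng i (ltnW hi).
case: (th _ (rng i (ltnW hi))) => [[-> li]|[-> li]];
  case: (th _ (rng i.+1 hi)) => [[-> li']|[-> li']].
- by rewrite subrr !mulr0 normr0.
- rewrite subr0 !mulr1 ler_norml; apply/andP; split; lra.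
- lra.
- by rewrite subrr !mulr0 normr0.
Qed.


Implicit Types (u v w : R -> R).
Definition rint (u : R -> R) := mu.-integrable setT (EFin \o u).
Definition RI (u : R -> R) := Rintegral mu setT u.

Lemma mfM (f g : R -> R) : measurable_fun setT f -> measurable_fun setT g -> measurable_fun setT (fun k => f k * g k).
Proof. move=> mf mg. exact: measurable_funM. Qed.
Lemma mfD (f g : R -> R) : measurable_fun setT f -> measurable_fun setT g -> measurable_fun setT (fun k => f k + g k).
Proof. move=> mf mg. exact: measurable_funD. Qed.
Lemma mfB (f g : R -> R) : measurable_fun setT f -> measurable_fun setT g -> measurable_fun setT (fun k => f k - g k).
Proof. move=> mf mg. exact: measurable_funB. Qed.

Lemma rint_meas u : rint u -> measurable_fun setT u.
Proof. by move/measurable_int/measurable_EFinP. Qed.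

Lemma rint_dom u w : measurable_fun setT u -> (forall k, `|u k| <= `|w k|) ->
  rint w -> rint u.
Proof.
move=> mu_ uw iw; apply: (le_integrable _ _ _ iw) => //.
  exact/measurable_EFinP.
by move=> k _ /=; rewrite lee_fin.
Qed.

Lemma rintD u v : rint u -> rint v -> rint (fun k => u k + v k).
Proof.
move=> iu iv; apply: (eq_integrable measurableT _ _ _ (integrableD measurableT iu iv)) => //.
Qed.

Lemma rintZ c u : rint u -> rint (fun k => c * u k).
Proof.
move=> iu; apply: (eq_integrable measurableT _ _ _ (integrableZl measurableT c iu)) => //.
Qed.

Lemma rintB u v : rint u -> rint v -> rint (fun k => u k - v k).
Proof.
move=> iu iv; apply: (eq_integrable measurableT _ _ _ (integrableB measurableT iu iv)) => //.
Qed.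

Lemma rint_abs u : rint u -> rint (fun k => `|u k|).
Proof.
move=> iu; apply: (@rint_dom _ u _ _ iu).
  change (measurable_fun setT (@Num.norm _ R \o u)); apply: measurableT_comp => //; exact: rint_meas.
by move=> k; rewrite normr_id.
Qed.

Lemma RID u v : rint u -> rint v -> RI (fun k => u k + v k) = RI u + RI v.
Proof. by move=> iu iv; rewrite /RI RintegralD. Qed.
Lemma RIB u v : rint u -> rint v -> RI (fun k => u k - v k) = RI u - RI v.
Proof. by move=> iu iv; rewrite /RI RintegralB. Qed.
Lemma RIZ c u : rint u -> RI (fun k => c * u k) = c * RI u.
Proof. by move=> iu; rewrite /RI RintegralZl. Qed.

Lemma rint_sum n (F : nat -> R -> R) : (forall i, rint (F i)) ->
  rint (fun k => \sum_(i < n) F i k).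
Proof.
move=> iF; elim: n => [|n IH].
  have -> : (fun k => \sum_(i < 0) F i k) = (fun _ => 0).
    by apply/funext => k; rewrite big_ord0.
  by apply: (eq_integrable measurableT _ _ _ (integrable0 _ _)).
have -> : (fun k => \sum_(i < n.+1) F i k) = (fun k => \sum_(i < n) F i k + F n k).
  by apply/funext => k; rewrite big_ord_recr.
exact: rintD.
Qed.

Lemma RI_sum n (F : nat -> R -> R) : (forall i, rint (F i)) ->
  \sum_(i < n) RI (F i) = RI (fun k => \sum_(i < n) F i k).
Proof.
move=> iF; elim: n => [|n IH].
  rewrite big_ord0; have -> : (fun k => \sum_(i < 0) F i k) = (fun _ => 0).
    by apply/funext => k; rewrite big_ord0.
  by rewrite /RI Rintegral_cst // mul0r.
rewrite big_ord_recr IH /=.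
have -> : (fun k => \sum_(i < n.+1) F i k) = (fun k => \sum_(i < n) F i k + F n k).
  by apply/funext => k; rewrite big_ord_recr.
by rewrite RID //; exact: rint_sum.
Qed.


Definition Gf u1 u2 (c1 c2 : R -> R) := RI (fun k => c1 k * u1 k + c2 k * u2 k).
Definition thr (m : R -> R -> R) (l : R -> R) := forall k t, -(1/2) <= t <= 1/2 ->
  (m t k = 0 /\ t <= l k) \/ (m t k = 1 /\ l k <= t).
Definition endpts (m : R -> R -> R) :=
  (forall k, m (-(1/2)) k = 0) /\ (forall k, m (1/2) k = 1).

Lemma rng_all (x xi : seq R) : tagged_partition (-(1/2)) (1/2) x xi ->
  forall i, -(1/2) <= nth 0 x i <= 1/2.
Proof.
move=> tp i; have [hi|hi] := leqP i (size xi); first exact: @part_range _ _ _ _ tp i hi.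
case: tp => sz _ _ _ _; rewrite nth_default; first by apply/andP; split; lra.
by rewrite sz.
Qed.

Lemma core u1 u2 (l1 l2 : R -> R) (m1 m2 : R -> R -> R) x xi d :
  rint u1 -> rint u2 -> measurable_fun setT l1 -> measurable_fun setT l2 ->
  (forall t, measurable_fun setT (m1 t)) -> (forall t, measurable_fun setT (m2 t)) ->
  thr m1 l1 -> thr m2 l2 -> endpts m1 -> endpts m2 ->
  tagged_partition (-(1/2)) (1/2) x xi -> mesh_lt x xi d ->
  `| \sum_(i < size xi) nth 0 xi i *
      (Gf u1 u2 (m1 (nth 0 x i.+1)) (m2 (nth 0 x i.+1)) -
       Gf u1 u2 (m1 (nth 0 x i)) (m2 (nth 0 x i))) - Gf u1 u2 l1 l2|
   <= d * RI (fun k => `|u1 k| + `|u2 k|).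
Proof.
move=> i1 i2 ml1 ml2 mm1 mm2 th1 th2 [e10 e11] [e20 e21] tp ms.
have rng := @rng_all _ _ tp.
have bm (m : R -> R -> R) l : thr m l -> forall t k, -(1/2) <= t <= 1/2 -> `|m t k| <= 1.
  by move=> th t k /(th k) [[-> _]|[-> _]]; rewrite ?normr0 ?normr1.
have bl (m : R -> R -> R) l : thr m l -> endpts m -> forall k, `|l k| <= 1.
  move=> th [e0 e1] k.
  have h0 : -(1/2) <= (-(1/2) : R) <= 1/2 by apply/andP; split; lra.
  have h1 : -(1/2) <= (1/2 : R) <= 1/2 by apply/andP; split; lra.
  case: (th k _ h0) => [[_ a]|[ee _]]; last by move: ee; rewrite e0 => /eqP; rewrite eq_sym oner_eq0.
  case: (th k _ h1) => [[ee _]|[_ b]]; first by move: ee; rewrite e1 => /eqP; rewrite oner_eq0.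
  rewrite ler_norml; apply/andP; split; lra.
have iG (c1 c2 : R -> R) : measurable_fun setT c1 -> measurable_fun setT c2 ->
    (forall k, `|c1 k| <= 1) -> (forall k, `|c2 k| <= 1) ->
    rint (fun k => c1 k * u1 k + c2 k * u2 k).
  move=> mc1 mc2 b1 b2; apply: rintD.
  - apply: (@rint_dom _ u1) => //; first (apply: mfM; [exact: mc1|exact: rint_meas i1]).
    by move=> k; rewrite normrM -[X in _ <= X]mul1r ler_wpM2r.
  - apply: (@rint_dom _ u2) => //; first (apply: mfM; [exact: mc2|exact: rint_meas i2]).
    by move=> k; rewrite normrM -[X in _ <= X]mul1r ler_wpM2r.
set Phi := fun t k => m1 t k * u1 k + m2 t k * u2 k.
have iPhi i : rint (Phi (nth 0 x i)).
  by apply: iG => // k; [exact: (bm _ _ th1)|exact: (bm _ _ th2)].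
have iL : rint (fun k => l1 k * u1 k + l2 k * u2 k).
  by apply: iG => // k; [exact: (bl _ _ th1)|exact: (bl _ _ th2)].
set F := fun i k => nth 0 xi i * (Phi (nth 0 x i.+1) k - Phi (nth 0 x i) k).
have iF i : rint (F i) by apply: rintZ; apply: rintB.
rewrite (eq_bigr (fun i : 'I_(size xi) => RI (F i))); last first.
  by move=> i _; rewrite /F RIZ ?RIB //; apply: rintB.
rewrite RI_sum // /Gf -RIB //; last exact: rint_sum.
have iD : rint (fun k => \sum_(i < size xi) F i k - (l1 k * u1 k + l2 k * u2 k)).
  by apply: rintB => //; exact: rint_sum.
apply: le_trans (le_normr_Rintegral measurableT iD) _.
rewrite -RIZ; last by apply: rintD; apply: rint_abs.
apply: le_Rintegral => //.
- exact: rint_abs.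
- by apply: rintZ; apply: rintD; apply: rint_abs.
move=> k _.
set S1 := \sum_(i < size xi) nth 0 xi i * (m1 (nth 0 x i.+1) k - m1 (nth 0 x i) k).
set S2 := \sum_(i < size xi) nth 0 xi i * (m2 (nth 0 x i.+1) k - m2 (nth 0 x i) k).
have -> : \sum_(i < size xi) F i k = u1 k * S1 + u2 k * S2.
  rewrite /S1 /S2 !mulr_sumr -big_split; apply: eq_bigr => i _.
  rewrite /F /Phi /=. ring.
have -> : u1 k * S1 + u2 k * S2 - (l1 k * u1 k + l2 k * u2 k) =
  u1 k * (S1 - l1 k) + u2 k * (S2 - l2 k) by ring.
apply: le_trans (ler_normD _ _) _.
rewrite !normrM mulrDr; apply: lerD; rewrite mulrC; apply: ler_wpM2r => //.
- apply: (@pw x xi d (l1 k) (fun t => m1 t k)) => // t; exact: th1.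
- apply: (@pw x xi d (l2 k) (fun t => m2 t k)) => // t; exact: th2.
Qed.

End Aux.

Section Conc.
Variable R : realType.

Lemma measurable_invR : measurable_fun [set: R] (@GRing.inv R).
Proof.
have -> : (@GRing.inv R) = (fun x => if x == 0 then 0 else x^-1).
  by apply/funext => x; case: eqP => [->|]; rewrite ?invr0.
apply: measurable_fun_if => //.
- exact: measurable_fun_eqr.
- have -> : [set: R] `&` (fun x : R => x == 0) @^-1` [set false] = [set x | x != 0].
    by apply/seteqP; split => x /=; [case=> _ /negbT|move/negbTE].
  apply: open_continuous_measurable_fun; first exact: open_neq.
  by move=> x; rewrite inE => /= x0; exact: inv_continuous.
Qed.

Lemma mf_e (q : R) : measurable_fun setT (fun k : R => expR (- (`|k| * q))).
Proof.
change (measurable_fun setT (expR \o (fun k : R => - (`|k| * q)))).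
apply: measurableT_comp; first exact: measurable_expR.
change (measurable_fun setT (@GRing.opp R \o (fun k : R => `|k| * q))).
apply: measurableT_comp => //.
apply: mfM => //; exact: normr_measurable.
Qed.

Lemma mS11 (q : R) : measurable_fun setT (S11 q).
Proof.
rewrite /S11; apply: mfM; first by apply: mfB => //; exact: mf_e.
change (measurable_fun setT (GRing.inv \o (fun k : R => 2 * `|k|))).
apply: measurableT_comp; first exact: measurable_invR.
apply: mfM => //; exact: normr_measurable.
Qed.

Lemma mS22 (q : R) : measurable_fun setT (S22 q).
Proof.
rewrite /S22; apply: mfM; first by apply: mfD => //; exact: mf_e.
change (measurable_fun setT (GRing.inv \o (fun k : R => 2 * `|k|))).
apply: measurableT_comp; first exact: measurable_invR.
apply: mfM => //; exact: normr_measurable.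
Qed.

Lemma S11_ge0 (q k : R) : 0 <= q -> 0 <= S11 q k.
Proof.
move=> q0; rewrite /S11; apply: divr_ge0; last by apply: mulr_ge0.
by rewrite subr_ge0 expR_le1 oppr_le0; apply: mulr_ge0.
Qed.

Lemma S22_ge0 (q k : R) : 0 <= S22 q k.
Proof.
rewrite /S22; apply: divr_ge0; last by apply: mulr_ge0.
by rewrite addr_ge0 // expR_ge0.
Qed.


Definition rchi (s : \bar R) (k : R) : R := if (k%:E <= s)%E then 1 else 0.
Lemma chiE s k : chi_le s k = rC (rchi s k).
Proof. by rewrite /chi_le /rchi; case: ifP. Qed.
Lemma rchi_fin (r k : R) : rchi r%:E k = if k <= r then 1 else 0.
Proof. by rewrite /rchi lee_fin. Qed.
Lemma rchi_y (k : R) : rchi +oo%E k = 1.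
Proof. by rewrite /rchi leey. Qed.
Lemma rchi_Ny (k : R) : rchi -oo%E k = 0.
Proof. by rewrite /rchi leeNy_eq. Qed.
Lemma mrchi (r : R) : measurable_fun setT (rchi r%:E).
Proof.
have -> : rchi r%:E = (fun k => if k <= r then 1 else 0).
  by apply/funext => k; rewrite rchi_fin.
apply: measurable_fun_ifT => //.
exact: measurable_fun_ler.
Qed.

Definition m1 (q t : R) (k : R) : R :=
  if t < 0 then rchi (- (ln (- (2 * t)) / q))%:E k - rchi (ln (- (2 * t)) / q)%:E k
  else 1.
Definition m2 (q t : R) (k : R) : R :=
  if t < 0 then 0
  else if 0 < t then rchi (ln (2 * t) / q)%:E k - rchi (- (ln (2 * t) / q))%:E k + 1
  else 0.
Definition l1 (q k : R) : R := - (1/2) * expR (- (`|k| * q)).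
Definition l2 (q k : R) : R := (1/2) * expR (- (`|k| * q)).

Definition scal (c1 c2 : R -> R) (g : pfun R) : pfun R :=
  (fun k => rC (c1 k) * g.1 k, fun k => rC (c2 k) * g.2 k).

Lemma Kstar_scal q g : Kstar q g = scal (l1 q) (l2 q) g.
Proof. by []. Qed.

Lemma Efam_scal q t g : Efam q t g = scal (m1 q t) (m2 q t) g.
Proof.
rewrite /Efam /scal /m1 /m2 /Iop /psub /padd /P1 /P2.
case: (t < 0); last case: (0 < t); congr pair; apply/funext => k /=;
  rewrite ?chiE ?rchi_y ?rchi_Ny;
  case: (g.1 k) => a b; case: (g.2 k) => a' b'; rewrite /rC /=; congr Complex; ring.
Qed.

Lemma mm1 q t : measurable_fun setT (m1 q t).
Proof.
rewrite /m1; case: (t < 0) => //; apply: mfB; exact: mrchi.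
Qed.

Lemma mm2 q t : measurable_fun setT (m2 q t).
Proof.
rewrite /m2; case: (t < 0) => //; case: (0 < t) => //.
by apply: mfD => //; apply: mfB; exact: mrchi.
Qed.

Lemma ml1 q : measurable_fun setT (l1 q).
Proof. by apply: mfM => //; exact: mf_e. Qed.
Lemma ml2 q : measurable_fun setT (l2 q).
Proof. by apply: mfM => //; exact: mf_e. Qed.


Lemma expH (q p k : R) : 0 < q -> 0 < p ->
  (- (ln p / q) <= `|k| -> expR (- (`|k| * q)) <= p) /\
  (`|k| <= - (ln p / q) -> p <= expR (- (`|k| * q))).
Proof.
move=> q0 p0.
have E : - (ln p / q) * q = - ln p by rewrite mulNr divfK // gt_eqF.
have pe : p = expR (ln p) by rewrite lnK // posrE.
split => h.
- rewrite [X in _ <= X]pe ler_expR.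
  have : - (ln p / q) * q <= `|k| * q by rewrite ler_wpM2r // ltW.
  rewrite E; lra.
- rewrite [X in X <= _]pe ler_expR.
  have : `|k| * q <= - (ln p / q) * q by rewrite ler_wpM2r // ltW.
  rewrite E; lra.
Qed.

Lemma sig_ge0 (q p : R) : 0 < q -> 0 < p <= 1 -> 0 <= - (ln p / q).
Proof.
move=> q0 /andP[p0 p1]; rewrite oppr_ge0; apply: mulr_le0_ge0.
  exact: ln_le0.
by rewrite invr_ge0 ltW.
Qed.

Lemma thr1 q : 0 < q -> thr R (m1 q) (l1 q).
Proof.
move=> q0 k t /andP[ta tb]; rewrite /m1 /l1.
have e0 := expR_ge0 (- (`|k| * q)).
have [tn|tp] := ltP t 0; last by right; split => //; lra.
have p0 : 0 < - (2 * t) <= 1 by apply/andP; split; lra.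
have s0 := @sig_ge0 q _ q0 p0.
have [H1 H2] := @expH q _ k q0 (proj1 (andP p0)).
set s := - (ln (- (2 * t)) / q) in s0 H1 H2 *.
have -> : ln (- (2 * t)) / q = - s by rewrite /s opprK.
rewrite !rchi_fin.
case: ifP => h1; case: ifP => h2.
- left; split; first by rewrite subrr.
  have : s <= `|k| by rewrite ler_normr; apply/orP; right; lra.
  move/H1; lra.
- right; split; first by rewrite subr0.
  have : `|k| <= s by rewrite ler_norml; apply/andP; split; lra.
  move/H2; lra.
- move/negbT: h1; rewrite -ltNge => h1; lra.
- left; split; first by rewrite subrr.
  move/negbT: h1; rewrite -ltNge => h1.
  have : s <= `|k| by rewrite ler_normr; apply/orP; left; lra.
  move/H1; lra.
Qed.

Lemma thr2 q : 0 < q -> thr R (m2 q) (l2 q).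
Proof.
move=> q0 k t /andP[ta tb]; rewrite /m2 /l2.
have e0 := expR_gt0 (- (`|k| * q)).
have [tn|tp] := ltP t 0; first by left; split => //; lra.
have [tp'|tn'] := ltP 0 t; last by left; split => //; lra.
have p0 : 0 < 2 * t <= 1 by apply/andP; split; lra.
have s0 := @sig_ge0 q _ q0 p0.
have [H1 H2] := @expH q _ k q0 (proj1 (andP p0)).
set s := - (ln (2 * t) / q) in s0 H1 H2 *.
have -> : ln (2 * t) / q = - s by rewrite /s opprK.
rewrite !rchi_fin.
case: ifP => h1; case: ifP => h2.
- right; split; first by rewrite subrr add0r.
  have : s <= `|k| by rewrite ler_normr; apply/orP; right; lra.
  move/H1; lra.
- move/negbT: h2; rewrite -ltNge => h2; lra.
- left; split; first by rewrite sub0r addNr.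
  have : `|k| <= s by rewrite ler_norml; apply/andP; split => //; move/negbT: h1; rewrite -ltNge => h1; lra.
  move/H2; lra.
- right; split; first by rewrite subrr add0r.
  move/negbT: h2; rewrite -ltNge => h2.
  have : s <= `|k| by rewrite ler_normr; apply/orP; left; lra.
  move/H1; lra.
Qed.

Lemma end1 q : endpts R (m1 q).
Proof.
split => k; rewrite /m1.
- have [h|h] := ltP (-(1/2) : R) 0; last by lra.
  have -> : - (2 * - (1/2)) = 1 :> R by lra.
  by rewrite ln1 mul0r oppr0 subrr.
- have [h|h] := ltP (1/2 : R) 0; first by lra.
  by [].
Qed.

Lemma end2 q : endpts R (m2 q).
Proof.
split => k; rewrite /m2.
- have [h|h] := ltP (-(1/2) : R) 0; last by lra.
  by [].
- have [h|h] := ltP (1/2 : R) 0; first by lra.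
  have [h'|h'] := ltP 0 (1/2 : R); last by lra.
  have -> : 2 * (1/2) = 1 :> R by lra.
  by rewrite ln1 mul0r oppr0 subrr add0r.
Qed.


Definition a1 (q : R) (f g : pfun R) k := S11 q k *
  (complex.Re (f.1 k) * complex.Re (g.1 k) + complex.Im (f.1 k) * complex.Im (g.1 k)).
Definition a2 (q : R) (f g : pfun R) k := S22 q k *
  (complex.Re (f.2 k) * complex.Re (g.2 k) + complex.Im (f.2 k) * complex.Im (g.2 k)).
Definition b1 (q : R) (f g : pfun R) k := S11 q k *
  (complex.Im (f.1 k) * complex.Re (g.1 k) - complex.Re (f.1 k) * complex.Im (g.1 k)).
Definition b2 (q : R) (f g : pfun R) k := S22 q k *
  (complex.Im (f.2 k) * complex.Re (g.2 k) - complex.Re (f.2 k) * complex.Im (g.2 k)).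

Lemma ReS q c1 c2 (f g : pfun R) k :
  complex.Re (Sform q f (scal c1 c2 g) k) = c1 k * a1 q f g k + c2 k * a2 q f g k.
Proof.
rewrite /Sform /scal /rC /a1 /a2 /=.
case: (f.1 k) => a b; case: (f.2 k) => a' b'; case: (g.1 k) => c d; case: (g.2 k) => c' d' /=.
ring.
Qed.
Lemma ImS q c1 c2 (f g : pfun R) k :
  complex.Im (Sform q f (scal c1 c2 g) k) = c1 k * b1 q f g k + c2 k * b2 q f g k.
Proof.
rewrite /Sform /scal /rC /b1 /b2 /=.
case: (f.1 k) => a b; case: (f.2 k) => a' b'; case: (g.1 k) => c d; case: (g.2 k) => c' d' /=.
ring.
Qed.

Lemma ipK_scal q (f g : pfun R) c1 c2 : ipK q f (scal c1 c2 g) =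
  Complex (Gf R (a1 q f g) (a2 q f g) c1 c2) (Gf R (b1 q f g) (b2 q f g) c1 c2).
Proof.
rewrite /ipK /Gf /RI; congr Complex; congr Rintegral; apply/funext => k.
  exact: ReS.
exact: ImS.
Qed.

Definition W q (f : pfun R) k := complex.Re (Sform q f f k).
Lemma WE q (f : pfun R) k : W q f k =
  S11 q k * (complex.Re (f.1 k) * complex.Re (f.1 k) + complex.Im (f.1 k) * complex.Im (f.1 k)) +
  S22 q k * (complex.Re (f.2 k) * complex.Re (f.2 k) + complex.Im (f.2 k) * complex.Im (f.2 k)).
Proof.
rewrite /W /Sform /rC /=.
case: (f.1 k) => a b; case: (f.2 k) => a' b' /=.
ring.
Qed.

Lemma sq_ge0 (a b : R) : 0 <= a * a + b * b.
Proof. by rewrite addr_ge0 // -expr2 sqr_ge0. Qed.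

Lemma W_ge0 q f k : 0 <= q -> 0 <= W q f k.
Proof.
move=> q0; rewrite WE addr_ge0 // mulr_ge0 ?sq_ge0 ?S22_ge0 ?S11_ge0 //.
Qed.


Lemma cmRe (h : R -> R[i]) : cmeasurable h -> measurable_fun setT (fun k => complex.Re (h k)).
Proof. by case. Qed.
Lemma cmIm (h : R -> R[i]) : cmeasurable h -> measurable_fun setT (fun k => complex.Im (h k)).
Proof. by case. Qed.

Lemma rintW q f : 0 < q -> inK q f -> rint R (W q f).
Proof.
move=> q0 [m1_ m2_ fin]; apply/integrableP; split.
  apply/measurable_EFinP.
  have -> : W q f = (fun k => S11 q k * (complex.Re (f.1 k) * complex.Re (f.1 k) + complex.Im (f.1 k) * complex.Im (f.1 k)) +
    S22 q k * (complex.Re (f.2 k) * complex.Re (f.2 k) + complex.Im (f.2 k) * complex.Im (f.2 k))).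
    by apply/funext => k; rewrite WE.
  apply: mfD; (apply: mfM; [exact: mS11 || exact: mS22|]);
  apply: mfD; apply: mfM; (exact: cmRe || exact: cmIm).
have E : (fun x => `|(EFin \o W q f) x|)%E = (fun k => (complex.Re (Sform q f f k))%:E).
  by apply/funext => k; rewrite /= ger0_norm // W_ge0 // ltW.
by rewrite E.
Qed.

Lemma bnd0 (s a b c d : R) : 0 <= s ->
  `|s * (a * c + b * d)| <= s * (a * a + b * b) + s * (c * c + d * d) /\
  `|s * (b * c - a * d)| <= s * (a * a + b * b) + s * (c * c + d * d).
Proof.
move=> s0.
have h1 := mulr_ge0 s0 (sq_ge0 (a - c) (b - d)).
have h2 := mulr_ge0 s0 (sq_ge0 (a + c) (b + d)).
have h3 := mulr_ge0 s0 (sq_ge0 (b - c) (a + d)).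
have h4 := mulr_ge0 s0 (sq_ge0 (b + c) (a - d)).
split; rewrite ler_norml; apply/andP; split; nra.
Qed.


Lemma rint_gen q f g (u : R -> R) : 0 < q -> inK q f -> inK q g ->
  measurable_fun setT u -> (forall k, `|u k| <= W q f k + W q g k) -> rint R u.
Proof.
move=> q0 iF iG mu_ b.
apply: (@rint_dom R _ (fun k => W q f k + W q g k)) => //.
- move=> k; rewrite (ger0_norm (addr_ge0 (W_ge0 q f k (ltW q0)) (W_ge0 q g k (ltW q0)))).
  exact: b.
- by apply: rintD; apply: rintW.
Qed.

Lemma ints q f g : 0 < q -> inK q f -> inK q g ->
  [/\ rint R (a1 q f g), rint R (a2 q f g), rint R (b1 q f g) & rint R (b2 q f g)].
Proof.
move=> q0 iF iG.
have [mf1 mf2 _] := iF; have [mg1 mg2 _] := iG.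
have s1 k := S11_ge0 q k (ltW q0); have s2 k := S22_ge0 q k.
have P k := mulr_ge0 (s1 k) (sq_ge0 (complex.Re (f.1 k)) (complex.Im (f.1 k))).
have P' k := mulr_ge0 (s1 k) (sq_ge0 (complex.Re (g.1 k)) (complex.Im (g.1 k))).
have Q k := mulr_ge0 (s2 k) (sq_ge0 (complex.Re (f.2 k)) (complex.Im (f.2 k))).
have Q' k := mulr_ge0 (s2 k) (sq_ge0 (complex.Re (g.2 k)) (complex.Im (g.2 k))).
split; apply: (@rint_gen q f g) => //.
- rewrite /a1; apply: mfM; first exact: mS11.
  by apply: mfD; apply: mfM; (exact: cmRe || exact: cmIm).
- move=> k; rewrite !WE /a1.
  have [h _] := bnd0 _ (complex.Re (f.1 k)) (complex.Im (f.1 k)) (complex.Re (g.1 k)) (complex.Im (g.1 k)) (s1 k).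
  have := Q k; have := Q' k; lra.
- rewrite /a2; apply: mfM; first exact: mS22.
  by apply: mfD; apply: mfM; (exact: cmRe || exact: cmIm).
- move=> k; rewrite !WE /a2.
  have [h _] := bnd0 _ (complex.Re (f.2 k)) (complex.Im (f.2 k)) (complex.Re (g.2 k)) (complex.Im (g.2 k)) (s2 k).
  have := P k; have := P' k; lra.
- rewrite /b1; apply: mfM; first exact: mS11.
  by apply: mfB; apply: mfM; (exact: cmRe || exact: cmIm).
- move=> k; rewrite !WE /b1.
  have [_ h] := bnd0 _ (complex.Re (f.1 k)) (complex.Im (f.1 k)) (complex.Re (g.1 k)) (complex.Im (g.1 k)) (s1 k).
  have := Q k; have := Q' k; lra.
- rewrite /b2; apply: mfM; first exact: mS22.
  by apply: mfB; apply: mfM; (exact: cmRe || exact: cmIm).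
- move=> k; rewrite !WE /b2.
  have [_ h] := bnd0 _ (complex.Re (f.2 k)) (complex.Im (f.2 k)) (complex.Re (g.2 k)) (complex.Im (g.2 k)) (s2 k).
  have := P k; have := P' k; lra.
Qed.


Lemma ReD_ (z w : R[i]) : complex.Re (z + w) = complex.Re z + complex.Re w.
Proof. by case: z; case: w. Qed.
Lemma ImD_ (z w : R[i]) : complex.Im (z + w) = complex.Im z + complex.Im w.
Proof. by case: z; case: w. Qed.
Lemma ReB_ (z w : R[i]) : complex.Re (z - w) = complex.Re z - complex.Re w.
Proof. by case: z; case: w. Qed.
Lemma ImB_ (z w : R[i]) : complex.Im (z - w) = complex.Im z - complex.Im w.
Proof. by case: z; case: w. Qed.

Lemma Re_sum n (F : 'I_n -> R[i]) : complex.Re (\sum_(i < n) F i) = \sum_(i < n) complex.Re (F i).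
Proof. exact: (big_morph _ ReD_). Qed.
Lemma Im_sum n (F : 'I_n -> R[i]) : complex.Im (\sum_(i < n) F i) = \sum_(i < n) complex.Im (F i).
Proof. exact: (big_morph _ ImD_). Qed.

Lemma ReT (x A B A' B' : R) : complex.Re (rC x * (Complex A' B' - Complex A B)) = x * (A' - A).
Proof. rewrite /rC /=; ring. Qed.
Lemma ImT (x A B A' B' : R) : complex.Im (rC x * (Complex A' B' - Complex A B)) = x * (B' - B).
Proof. rewrite /rC /=; ring. Qed.

Lemma cnorm_le (z : R[i]) : cnorm z <= `|complex.Re z| + `|complex.Im z|.
Proof.
rewrite /cnorm; set a := complex.Re z; set b := complex.Im z.
have h : a ^+ 2 + b ^+ 2 <= (`|a| + `|b|) ^+ 2.
  rewrite sqrrD !real_normK ?num_real //.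
  have := mulr_ge0 (normr_ge0 a) (normr_ge0 b); rewrite mulr2n; lra.
apply: le_trans (_ : Num.sqrt ((`|a| + `|b|) ^+ 2) <= _).
  by rewrite ler_sqrt // sqr_ge0.
by rewrite sqrtr_sqr ger0_norm // addr_ge0.
Qed.

Lemma main (Rad rad : R) :
  0 < rad -> rad < Rad ->
  forall f g : pfun R,
    inK (qval Rad rad) f -> inK (qval Rad rad) g ->
    is_RS_integral (fun t : R => t)
      (fun t : R => ipK (qval Rad rad) f (Efam (qval Rad rad) t g))
      (- (1 / 2)) (1 / 2)
      (ipK (qval Rad rad) f (Kstar (qval Rad rad) g)).
Proof.
move=> r0 rR f g iF iG eps e0.
set q := qval Rad rad.
have q0 : 0 < q.
  rewrite /q /qval subr_gt0 !div1r ltf_pV2 ?posrE; try apply: mulr_gt0 => //; try lra.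
have [iA1 iA2 iB1 iB2] := ints q f g q0 iF iG.
set IA := RI R (fun k => `|a1 q f g k| + `|a2 q f g k|).
set IB := RI R (fun k => `|b1 q f g k| + `|b2 q f g k|).
have IA0 : 0 <= IA by apply: Rintegral_ge0 => k _; rewrite addr_ge0.
have IB0 : 0 <= IB by apply: Rintegral_ge0 => k _; rewrite addr_ge0.
have dpos : 0 < 1 + IA + IB by lra.
exists (eps / (1 + IA + IB)); first by rewrite divr_gt0.
move=> x xi tp ms.
have cA := @core R _ _ _ _ _ _ _ _ _ iA1 iA2 (ml1 q) (ml2 q) (mm1 q) (mm2 q) (thr1 q q0) (thr2 q q0) (end1 q) (end2 q) tp ms.
have cB := @core R _ _ _ _ _ _ _ _ _ iB1 iB2 (ml1 q) (ml2 q) (mm1 q) (mm2 q) (thr1 q q0) (thr2 q q0) (end1 q) (end2 q) tp ms.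
rewrite Kstar_scal ipK_scal /RS_sum.
under eq_bigr do rewrite !Efam_scal !ipK_scal.
apply: le_lt_trans (cnorm_le _) _.
rewrite ReB_ ImB_ Re_sum Im_sum /=.
under eq_bigr do rewrite mul0r subr0.
under [X in _ + `|X - _|]eq_bigr do rewrite mul0r addr0.
apply: le_lt_trans (lerD cA cB) _.
rewrite -/IA -/IB.
rewrite -mulrDr mulrAC ltr_pdivrMr //.
have : 0 < eps * 1 by rewrite mulr1.
rewrite !mulrDr mulr1; lra.
Qed.

End Conc.

Theorem theorem3p5 (R : realType) (Rad rad : R) :
  0 < rad -> rad < Rad ->
  forall f g : pfun R,
    inK (qval Rad rad) f -> inK (qval Rad rad) g ->
    is_RS_integral (fun t : R => t)
      (fun t : R => ipK (qval Rad rad) f (Efam (qval Rad rad) t g))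
      (- (1 / 2)) (1 / 2)
      (ipK (qval Rad rad) f (Kstar (qval Rad rad) g)).
Proof. exact: main. Qed.
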